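(* Let $\lambda$ be a partition of $d$ with at most $n$ parts, padded with zeros to length $n$, and let $\nu$ be its reduction. Then $|N_\lambda|=|N_\nu|$. Moreover, $\mathcal{M}_{n,\lambda}=\mathcal{M}_{n,\nu}$ in $\mathbb{P}^{|N_\nu|-1}$, where the coordinates are identified by the bijection $N_\lambda\to N_\nu$ that replaces each entry of an index vector by the corresponding entry of $\nu$, as described below.
   Context: Work over $\mathbb{C}$. Reduction: pad $\lambda$ with zeros to length $n$. Let the distinct values occurring in the padded $\lambda$ (including $0$ if present) have multiplicities $k_0\ge k_1\ge\cdots\ge k_s$, and let $v_j$ denote the value with multiplicity $k_j$. The reduction of $\lambda$ is $$\nu=(\underbrace{s,\ldots,s}_{k_s},\underbrace{s-1,\ldots,s-1}_{k_{s-1}},\ldots,\underbrace{1,\ldots,1}_{k_1},\underbrace{0,\ldots,0}_{k_0}).$$ For example, both $(8,5,5,4)$ and $(7,7,3,0)$ (with $n=4$) have reduction $(2,1,0,0)$. The coordinate bijection replaces each entry $v_j$ of an index vector by $j$. For a vector $\kappa\in\mathbb{Z}_{\ge0}^n$ (such as the padded $\lambda$ or $\nu$), $N_\kappa$ is the set of all rearrangements $(i_1,\ldots,i_n)$ of $\kappa$; equivalently, the index vectors whose multiset of nonzero entries equals the nonzero parts of $\kappa$. The variety $\mathcal{M}_{n,\kappa}\subset\mathbb{P}^{|N_\kappa|-1}$, with coordinates $m_{i_1\cdots i_n}$ for $(i_1,\ldots,i_n)\in N_\kappa$, is the Zariski closure of the image of the monomial map $(\mu_{ki})\mapsto(\mu_{1i_1}\cdots\mu_{ni_n})_{(i_1,\ldots,i_n)\in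 N_\kappa}$, with the convention $\mu_{k0}=1$. *)

(* Defs.v *)
From HB Require Import structures.
From mathcomp Require Import all_boot all_order all_algebra.
From mathcomp Require Import reals.
From mathcomp Require Import complex.
From mathcomp Require Import mpoly.

Set Implicit Arguments.
Unset Strict Implicit.
Unset Printing Implicit Defensive.

Import Order.TTheory GRing.Theory Num.Theory.
Local Open Scope ring_scope.

Definition CC (R : realType) : numClosedFieldType := (R[i])%C.

Definition pad (n : nat) (lam : seq nat) : seq nat :=
  lam ++ nseq (n - size lam) 0%N.

Definition Nidx (kappa : seq nat) : seq (seq nat) := permutations kappa.

(* Given an enumeration vs = [:: v_0; ...; v_s] of the distinct values of
   the padded partition (ordered by nonincreasing multiplicity), the
   reduction nu = (s^{k_s}, ..., 1^{k_1}, 0^{k_0}). *)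
Definition reduction (lamp vs : seq nat) : seq nat :=
  flatten [seq nseq (count_mem (nth 0%N vs j) lamp) j
          | j <- rev (iota 0 (size vs))].

Definition code (vs : seq nat) (i : seq nat) : seq nat :=
  [seq index v vs | v <- i].


Definition monom (C : fieldType) (mu : nat -> nat -> C) (i : seq nat) : C :=
  \prod_(k < size i) (if nth 0%N i k == 0%N then 1 else mu k (nth 0%N i k)).

(* Point of P^{|N_kappa|-1} (affine representative) attached to a function
   x on index vectors, in the coordinates m_i, i in N_kappa. *)
Definition coords (C : fieldType) (kappa : seq nat) (x : seq nat -> C)
  : 'I_(size (Nidx kappa)) -> C :=
  fun j => x (nth [::] (Nidx kappa) j).
Arguments coords : clear implicits.

(* [x] lies in M_{n,kappa}: x is a nonzero vector and every homogeneous
   polynomial vanishing on the image of the monomial map vanishes at x,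
   i.e. [x] is in the Zariski closure of the image in P^{|N_kappa|-1}. *)
Definition inM (C : fieldType) (kappa : seq nat) (x : seq nat -> C) : Prop :=
  (exists j, coords C kappa x j != 0) /\
  forall (d : nat) (p : {mpoly C[size (Nidx kappa)]}),
    p \is d.-homog ->
    (forall mu : nat -> nat -> C, p.@[coords C kappa (monom (C:=C) mu)] = 0) ->
    p.@[coords C kappa x] = 0.

(* Main.v *)
Require Import Defs.
From HB Require Import structures.
From mathcomp Require Import all_boot all_order all_algebra.
From mathcomp Require Import reals complex mpoly.
From mathcomp Require Import fingroup perm.
Set Implicit Arguments. Unset Strict Implicit. Unset Printing Implicit Defensive.
Import Order.TTheory GRing.Theory Num.Theory.
Local Open Scope ring_scope.

Section Alg.
Variable C : numFieldType.

Lemma meval_scale N (p : {mpoly C[N]}) d c (v : 'I_N -> C) :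
  p \is d.-homog -> p.@[fun j => c * v j] = c ^+ d * p.@[v].
Proof.
move=> /dhomogP Hd; rewrite !mevalE big_distrr /=.
apply: eq_big_seq => m Hm; rewrite mulrCA; congr (_ * _).
have -> : d = (\sum_i m i)%N.
  by rewrite -(Hd m Hm) /= mdegE.
rewrite -prodrXr -big_split /=.
by apply: eq_bigr => i _; rewrite exprMn.
Qed.

Lemma meval_msym N (p : {mpoly C[N]}) (s : 'S_N) (v : 'I_N -> C) :
  (msym s p).@[v] = p.@[fun i => v (s i)].
Proof.
rewrite {1}(mpolyE p) [msym s _]linear_sum /= rmorph_sum /= mevalE.
apply: eq_bigr => m _; rewrite msymZ mevalZ msymX mevalX; congr (_ * _).
rewrite (reindex s) /=; last by exists (s^-1)%g => i _; rewrite ?permK ?permKV.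
by apply: eq_bigr => i _; rewrite mnmE permK.
Qed.

Lemma msym_homog N (p : {mpoly C[N]}) (s : 'S_N) d :
  p \is d.-homog -> msym s p \is d.-homog.
Proof.
rewrite !homog_piE => /eqP Hp; by rewrite -msym_pihomog Hp.
Qed.

Lemma poly_vanish (P : {poly C}) : (forall t, t != 0 -> P.[t] = 0) -> P = 0.
Proof.
move=> H; apply/eqP; apply/negPn/negP => HP.
pose rs := mkseq (fun i => (i.+1)%:R : C) (size P).
have Hr : all (root P) rs.
  apply/allP => x /mapP [i _ ->]; apply/rootP/H; by rewrite pnatr_eq0.
have Hu : uniq rs.
  rewrite map_inj_uniq ?iota_uniq // => i j /eqP; rewrite eqr_nat => /eqP []; done.
have := max_poly_roots HP Hr Hu; by rewrite size_mkseq ltnn.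
Qed.

Lemma meval_poly N (p : {mpoly C[N]}) (E : 'I_N -> {poly C}) :
  exists P : {poly C}, forall t, P.[t] = p.@[fun j => (E j).[t]].
Proof.
exists (\sum_(m <- msupp p) (p@_m)%:P * \prod_i E i ^+ m i) => t.
rewrite mevalE -[_.[t]]/(horner_eval t _) rmorph_sum /=.
apply: eq_bigr => m _; rewrite rmorphM rmorph_prod /= horner_evalE hornerC.
congr (_ * _); apply: eq_bigr => i _; by rewrite rmorphXn /= horner_evalE.
Qed.
End Alg.
Section Core.
Variable C : numFieldType.
Variables (N m : nat) (L : 'I_N -> seq nat).

Definition pt (F : nat -> nat -> C) : 'I_N -> C :=
  fun j => \prod_(k < m) F k (nth 0%N (L j) k).

Lemma core (p : {mpoly C[N]}) d (a b : nat) : p \is d.-homog ->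
  (forall F, (forall k, F k b = 1) -> p.@[pt F] = 0) ->
  forall F, (forall k, F k a = 1) -> p.@[pt F] = 0.
Proof.
move=> Hh Hb.
have [->|nab] := eqVneq a b; first exact: Hb.
suff Q : forall i F, (forall k, F k a = 1) ->
    (forall k, (i <= k < m)%N -> F k b != 0) -> p.@[pt F] = 0.
  move=> F Fa; apply: (Q m) => // k; by rewrite ltnNge andbN.
elim=> [|i IH] F Fa Fb.
  pose F' k v := if (k < m)%N then F k v / F k b else 1.
  have -> : p.@[pt F] = p.@[fun j => (\prod_(k < m) F k b) * pt F' j].
    apply: meval_eq => j; rewrite /pt -big_split /=; apply: eq_bigr => k _.
    rewrite /F' ltn_ord mulrC divfK //; apply: Fb; by rewrite ltn_ord.
  rewrite (@meval_scale C N p d _ (pt F') Hh) Hb ?mulr0 // => k; rewrite /F'.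
  by case: ifP => // km; rewrite divff // Fb // km.
have [Fib|Fib] := eqVneq (F i b) 0; last first.
  apply: IH => // k /andP [ik km]; move: ik; rewrite leq_eqVlt => /orP [/eqP <-|ik] //.
  by apply: Fb; rewrite ik.
pose Ft t k v := if (k == i) && (v == b) then t else F k v.
pose E j := \prod_(k < m) (if (k == i :> nat) && (nth 0%N (L j) k == b) then 'X
                            else (F k (nth 0%N (L j) k))%:P).
have HE t : p.@[fun j => (E j).[t]] = p.@[pt (Ft t)].
  apply: meval_eq => j; rewrite /E /pt -[_.[t]]/(horner_eval t _) rmorph_prod /=.
  apply: eq_bigr => k _; rewrite /Ft; case: ifP => _; by rewrite horner_evalE ?hornerX ?hornerC.
have [P HP] := meval_poly p E.
have P0 : P = 0.
  apply: poly_vanish => t t0; rewrite HP HE; apply: IH.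
    by move=> k; rewrite /Ft (negbTE (nab)) andbF.
  move=> k /andP [ik km]; rewrite /Ft eqxx andbT; case: ifP => [_|/negbT ki]; first done.
  apply: Fb; by rewrite km andbT ltn_neqAle ik eq_sym ki.
transitivity (p.@[pt (Ft 0)]); last by rewrite -HE -HP P0 horner0.
apply: meval_eq => j; rewrite /pt; apply: eq_bigr => k _; rewrite /Ft.
by case: ifP => // /andP [/eqP -> /eqP ->]; rewrite Fib.
Qed.
End Core.
Section Transfer.
Variable C : numFieldType.
Variables (vs : seq nat) (m : nat).

Definition g (mu : nat -> nat -> C) k w : C := if w == 0%N then 1 else mu k w.

Lemma monom_pt mu i : size i = m -> monom mu i = \prod_(k < m) g mu k (nth 0%N i k).
Proof. by move=> Hs; rewrite /monom Hs. Qed.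

Definition inMg N (f : 'I_N -> seq nat) (x : seq nat -> C) :=
  (exists j, x (f j) != 0) /\
  forall d (p : {mpoly C[N]}), p \is d.-homog ->
    (forall mu, p.@[fun j => monom mu (f j)] = 0) -> p.@[fun j => x (f j)] = 0.

Lemma gF0 F : (forall k, F k 0%N = 1) -> forall k w, g F k w = F k w.
Proof. by move=> F0 k w; rewrite /g; case: eqP => // ->; rewrite F0. Qed.

Lemma transfer NA NB (e : NA = NB) (fA : 'I_NA -> seq nat) (fB : 'I_NB -> seq nat)
  (sig : 'I_NA -> 'I_NB) :
  injective sig -> (forall j, fB (sig j) = code vs (fA j)) ->
  (forall j, size (fA j) = m) -> (forall j, all (mem vs) (fA j)) ->
  forall x, inMg fB x <-> inMg fA (fun i => x (code vs i)).
Proof.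
subst NB => sinj Hf HA Hvs x.
pose s := perm sinj.
have sE j : s j = sig j by rewrite permE.
have HfB j : fB j = code vs (fA ((s^-1)%g j)).
  by rewrite -{1}(permKV s j) sE Hf.
have HBs j : size (fB j) = m by rewrite HfB size_map HA.
have nthc y k : (k < size y)%N -> nth 0%N (code vs y) k = index (nth 0%N y k) vs.
  by move=> hk; rewrite /code (nth_map 0%N).
split.
- move=> [[j' Hj'] H2]; split.
    exists ((s^-1)%g j'); by rewrite -Hf -sE permKV.
  move=> d p Hh Hv.
  have Hq := H2 d (msym s p) (msym_homog s Hh).
  rewrite meval_msym in Hq.
  have <- : p.@[fun i => x (fB (s i))] = p.@[fun j => x (code vs (fA j))].
    by apply: meval_eq => j; rewrite sE Hf.
  apply: Hq => mu; rewrite meval_msym.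
  pose G k v := g mu k (index v vs).
  have -> : p.@[fun i => monom mu (fB (s i))] = p.@[pt m fA G].
    apply: meval_eq => j; rewrite sE Hf monom_pt ?size_map ?HA //.
    rewrite /pt; apply: eq_bigr => k _; rewrite nthc // HA //.
  apply: (core Hh (a := nth 0%N vs 0) (b := 0%N)).
    move=> F F0; rewrite -(Hv F); apply: meval_eq => j.
    rewrite monom_pt // /pt; apply: eq_bigr => k _; by rewrite gF0.
  move=> k; rewrite /G /g; case: vs => [|v vs'] //=; by rewrite eqxx.
- move=> [[j0 Hj] H2]; split.
    exists (s j0); by rewrite sE Hf.
  move=> d p Hh Hv.
  have Hr := H2 d (msym (s^-1)%g p) (msym_homog _ Hh).
  rewrite meval_msym in Hr.
  have <- : p.@[fun i => x (code vs (fA ((s^-1)%g i)))] = p.@[fun j => x (fB j)].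
    by apply: meval_eq => j; rewrite HfB.
  apply: Hr => mu; rewrite meval_msym.
  pose G k w := g mu k (nth 0%N vs w).
  have -> : p.@[fun i => monom mu (fA ((s^-1)%g i))] = p.@[pt m fB G].
    apply: meval_eq => j; rewrite monom_pt ?HA //.
    rewrite /pt; apply: eq_bigr => k _; rewrite HfB nthc ?HA // /G nth_index //.
    apply: (allP (Hvs ((s^-1)%g j))); apply: mem_nth; by rewrite HA.
  apply: (core Hh (a := index 0%N vs) (b := 0%N)).
    move=> F F0; rewrite -(Hv F); apply: meval_eq => j.
    rewrite monom_pt // /pt; apply: eq_bigr => k _; by rewrite gF0.
  move=> k; rewrite /G /g.
  have [h0|h0] := boolP (0%N \in vs); first by rewrite nth_index.
  by rewrite memNindex // nth_default.
Qed.
End Transfer.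
Lemma codeK vs i : all (mem vs) i -> map (nth 0%N vs) (code vs i) = i.
Proof.
move=> /allP H; rewrite /code -map_comp; apply: map_id_in => v hv /=.
by rewrite nth_index //; apply: H.
Qed.

Lemma S2 (lamp vs : seq nat) : uniq vs -> {subset lamp <= vs} ->
  perm_eq (code vs lamp) (reduction lamp vs).
Proof.
move=> Hu Hs; apply/allP => w _; apply/eqP.
rewrite /reduction count_flatten -map_comp map_rev sumn_rev.
rewrite (eq_map (g := fun j => ((j == w) * count_mem (nth 0%N vs j) lamp)%N)); last first.
  by move=> j /=; rewrite count_nseq.
rewrite sumnE big_map -{1}(subn0 (size vs)) -/(index_iota 0 (size vs)) big_mkord.
case: (ltnP w (size vs)) => hw.
- rewrite (bigD1 (Ordinal hw)) //= eqxx mul1n big1 ?addn0; last first.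
    by move=> j /negbTE; rewrite -val_eqE /= => ->.
  rewrite count_map; apply: eq_in_count => v hv /=.
  apply/eqP/eqP => [<-|->]; first by rewrite nth_index // Hs.
  by rewrite index_uniq.
- rewrite big1; last first.
    move=> j _; suff -> : (j == w :> nat) = false by [].
    by apply/negbTE; rewrite neq_ltn (leq_trans (ltn_ord j) hw).
  rewrite count_map; apply/eqP; rewrite -leqn0 leqNgt -has_count; apply/hasPn => v hv /=.
  have := index_mem v vs; rewrite Hs // => h.
  by rewrite neq_ltn (leq_trans h hw).
Qed.

Lemma S3 (lamp vs : seq nat) : uniq vs -> {subset lamp <= vs} ->
  perm_eq (map (code vs) (permutations lamp)) (permutations (reduction lamp vs)).
Proof.
move=> Hu Hs; have S2' := S2 Hu Hs.
have allv i : i \in permutations lamp -> all (mem vs) i.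
  rewrite mem_permutations => h; apply/allP => v hv; apply: Hs; by rewrite -(perm_mem h).
apply: uniq_perm; last 1 first.
- move=> t; apply/mapP/idP.
    move=> [i hi ->]; rewrite mem_permutations; apply: (perm_trans _ S2').
    by apply: perm_map; rewrite -mem_permutations.
  rewrite mem_permutations => ht.
  have ht' : perm_eq t (code vs lamp) by rewrite (perm_trans ht) // perm_sym.
  exists (map (nth 0%N vs) t).
    rewrite mem_permutations.
    have := perm_map (nth 0%N vs) ht'; rewrite codeK //; by apply/allP => v; apply: Hs.
  rewrite /code -map_comp; apply/esym; apply: map_id_in => w hw /=.
  move: hw; rewrite (perm_mem ht') => /mapP [v hv ->].
  by rewrite nth_index // Hs.
- rewrite map_inj_in_uniq ?permutations_uniq // => i1 i2 h1 h2 e.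
  by rewrite -(codeK (allv _ h1)) e codeK // allv.
- exact: permutations_uniq.
Qed.

Theorem lemma4p2 (R : realType) (n d : nat) (lam vs : seq nat) :
  (* lam is a partition of d with at most n parts *)
  sorted geq lam -> all (fun x => 0 < x)%N lam -> sumn lam = d ->
  (size lam <= n)%N ->
  (* vs enumerates the distinct values of the padded partition,
     by nonincreasing multiplicity *)
  uniq vs -> (forall v, (v \in pad n lam) = (v \in vs)) ->
  sorted geq [seq count_mem v (pad n lam) | v <- vs] ->
  let nu := reduction (pad n lam) vs in
  size (Nidx (pad n lam)) = size (Nidx nu) /\
  perm_eq [seq code vs i | i <- Nidx (pad n lam)] (Nidx nu) /\
  (forall x : seq nat -> CC R,
     inM nu x <-> inM (pad n lam) (fun i => x (code vs i))).
Proof.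
move=> _ _ _ _ Hu Hmem _ nu.
have Hs : {subset pad n lam <= vs} by move=> v; rewrite Hmem.
have H3 := S3 Hu Hs.
split; first by rewrite -(perm_size H3) size_map.
split; first exact: H3.
move=> x.
have Hin (j : 'I_(size (Nidx (pad n lam)))) :
    code vs (nth [::] (Nidx (pad n lam)) j) \in Nidx nu.
  by rewrite -(perm_mem H3) map_f // mem_nth.
pose sigma (j : 'I_(size (Nidx (pad n lam)))) : 'I_(size (Nidx nu)) :=
  Ordinal (etrans (index_mem _ _) (Hin j)).
have Hf j : nth [::] (Nidx nu) (sigma j) = code vs (nth [::] (Nidx (pad n lam)) j).
  by rewrite /= nth_index.
have memA (j : 'I_(size (Nidx (pad n lam)))) :
    perm_eq (nth [::] (Nidx (pad n lam)) j) (pad n lam).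
  by rewrite -mem_permutations mem_nth.
have HA (j : 'I_(size (Nidx (pad n lam)))) : size (nth [::] (Nidx (pad n lam)) j) = size (pad n lam).
  by rewrite (perm_size (memA j)).
have Hvs (j : 'I_(size (Nidx (pad n lam)))) : all (mem vs) (nth [::] (Nidx (pad n lam)) j).
  apply/allP => v hv; apply: Hs; by rewrite -(perm_mem (memA j)).
have sinj : injective sigma.
  move=> j1 j2 e; have := Hf j1; rewrite e Hf => /(congr1 (map (nth 0%N vs))).
  rewrite !codeK // => /eqP; rewrite nth_uniq ?permutations_uniq // => /eqP h.
  by apply: ord_inj; rewrite h.
have eN : size (Nidx (pad n lam)) = size (Nidx nu) by rewrite -(perm_size H3) size_map.
exact: (@transfer (CC R) vs (size (pad n lam)) _ _ eN
  (fun j => nth [::] (Nidx (pad n lam)) j) (fun j => nth [::] (Nidx nu) j) sigma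
  sinj Hf HA Hvs x).
Qed.
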